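(* Let $L$ be a sublattice of $A_n$ of rank $n$. Then $$\Sigma^c(L)=\bigcup_{\nu\in\mathrm{Ext}^c(L)}\{x\in\mathbb R^{n+1}:x\ge\nu\}.$$
   Context: Let $n\ge 1$, $H_0=\{x\in\mathbb R^{n+1}:\sum_i x_i=0\}$ and $A_n=H_0\cap\mathbb Z^{n+1}$. For $x\in\mathbb R^{n+1}$, $\deg(x)=\sum_i x_i$. Write $x\le y$ iff $x_i\le y_i$ for all $i$. Let $\Sigma^{\mathbb R}(L)=\{x\in\mathbb R^{n+1}: x\not\le q\text{ for all }q\in L\}$ and let $\Sigma^c(L)$ be its topological closure in $\mathbb R^{n+1}$. $\mathrm{Ext}^c(L)$ is the set of points $x\in\Sigma^c(L)$ that are local minima of $\deg$ on $\Sigma^c(L)$, i.e. there is an open ball $B\ni x$ with $\deg(x)\le\deg(y)$ for all $y\in B\cap\Sigma^c(L)$. *)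

(* Defs.v *)
From Stdlib Require Import Reals Lra ZArith.
Open Scope R_scope.

(* Points of R^(n+1) are represented as functions nat -> R; only the
   coordinates 0..n are ever inspected by the predicates below. *)
Definition vec := nat -> R.
Definition zvec := nat -> Z.

Definition deg (n : nat) (x : vec) : R := sum_f_R0 x n.

Definition vle (n : nat) (x y : vec) : Prop := forall i, (i <= n)%nat -> x i <= y i.

Definition dist (n : nat) (x y : vec) : R :=
  sqrt (sum_f_R0 (fun i => (x i - y i) ^ 2) n).

Definition zR (q : zvec) : vec := fun i => IZR (q i).

(* A_n = H_0 ∩ Z^(n+1); integer vectors are canonically zero beyond index n *)
Definition in_An (n : nat) (q : zvec) : Prop :=
  (sum_f_R0 (fun i => IZR (q i)) n = 0) /\ (forall i, (n < i)%nat -> q i = 0%Z).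

Definition sublattice_An (n : nat) (L : zvec -> Prop) : Prop :=
  (forall q, L q -> in_An n q) /\
  L (fun _ => 0%Z) /\
  (forall p q, L p -> L q -> L (fun i => (p i - q i)%Z)).

(* L has rank n: it contains n vectors v_0..v_{n-1} linearly independent over R
   (rank <= n is automatic since L ⊆ A_n, which has rank n). *)
Definition has_rank (n : nat) (L : zvec -> Prop) : Prop :=
  exists v : nat -> zvec,
    (forall k, (k < n)%nat -> L (v k)) /\
    (forall c : nat -> R,
        (forall i, (i <= n)%nat ->
           sum_f_R0 (fun k => c k * IZR (v k i)) (Nat.pred n) = 0) ->
        forall k, (k < n)%nat -> c k = 0).

Definition SigmaR (n : nat) (L : zvec -> Prop) (x : vec) : Prop :=
  forall q, L q -> ~ vle n x (zR q).

Definition closure (n : nat) (S : vec -> Prop) (x : vec) : Prop :=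
  forall eps, 0 < eps -> exists y, S y /\ dist n x y < eps.

Definition Sigmac (n : nat) (L : zvec -> Prop) : vec -> Prop :=
  closure n (SigmaR n L).

Definition Extc (n : nat) (L : zvec -> Prop) (x : vec) : Prop :=
  Sigmac n L x /\
  exists r, 0 < r /\
    forall y, dist n x y < r -> Sigmac n L y -> deg n x <= deg n y.

(* Main.v *)
Require Import Defs.
From Stdlib Require Import Reals ZArith Lra Lia Classical FunctionalExtensionality.
Open Scope R_scope.

Fixpoint rsum (m : nat) (f : nat -> R) : R :=
  match m with O => 0 | S p => rsum p f + f p end.

Lemma rsum_ext m f g : (forall k, (k < m)%nat -> f k = g k) -> rsum m f = rsum m g.
Proof. induction m; simpl; intros H; [reflexivity|]. rewrite IHm by (intros; apply H; lia). rewrite H by lia. reflexivity. Qed.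

Lemma rsum_plus m f g : rsum m (fun k => f k + g k) = rsum m f + rsum m g.
Proof. induction m; simpl; [ring|]. rewrite IHm; ring. Qed.

Lemma rsum_scal m c f : rsum m (fun k => c * f k) = c * rsum m f.
Proof. induction m; simpl; [ring|]. rewrite IHm; ring. Qed.

Lemma rsum_opp m f : rsum m (fun k => - f k) = - rsum m f.
Proof. induction m; simpl; [ring|]. rewrite IHm; ring. Qed.

Lemma rsum_zero m : rsum m (fun _ => 0) = 0.
Proof. induction m; simpl; [ring|]. rewrite IHm; ring. Qed.

Lemma rsum_le m f g : (forall k, (k < m)%nat -> f k <= g k) -> rsum m f <= rsum m g.
Proof. induction m; simpl; intros H; [lra|]. assert (f m <= g m) by (apply H; lia).
  assert (rsum m f <= rsum m g) by (apply IHm; intros; apply H; lia). lra. Qed.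

Lemma rsum_swap p q (f : nat -> nat -> R) :
  rsum p (fun k => rsum q (fun j => f k j)) = rsum q (fun j => rsum p (fun k => f k j)).
Proof. induction p; simpl. - symmetry; apply rsum_zero. - rewrite IHp, <- rsum_plus. reflexivity. Qed.

Definition skip (r k : nat) : nat := if Nat.ltb k r then k else S k.

Lemma rsum_skip p r g : (r <= p)%nat -> rsum (S p) g = rsum p (fun k => g (skip r k)) + g r.
Proof.
  induction p; intros Hr.
  - assert (r = 0%nat) by lia; subst. simpl. ring.
  - destruct (Nat.eq_dec r (S p)).
    + subst. change (rsum (S (S p)) g) with (rsum (S p) g + g (S p)).
      f_equal. apply rsum_ext. intros k Hk. unfold skip. destruct (Nat.ltb_spec k (S p)); [reflexivity| lia].
    + change (rsum (S (S p)) g) with (rsum (S p) g + g (S p)).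
      rewrite IHp by lia. simpl. replace (skip r p) with (S p).
      ring. unfold skip. destruct (Nat.ltb_spec p r); [lia|reflexivity].
Qed.

Lemma sum_rsum f N : sum_f_R0 f N = rsum (S N) f.
Proof. induction N; simpl. ring. rewrite IHN. simpl. reflexivity. Qed.

Lemma dep m : forall w : nat -> nat -> R, exists a : nat -> R,
  (exists k, (k <= m)%nat /\ a k <> 0) /\
  forall j, (j < m)%nat -> rsum (S m) (fun k => a k * w k j) = 0.
Proof.
  induction m; intros w.
  - exists (fun _ => 1). split. exists 0%nat. split; [lia|lra]. intros; lia.
  - destruct (classic (exists r, (r <= S m)%nat /\ w r m <> 0)) as [[r [Hr Hw]]|Hn].
    + set (w' := fun k j => w (skip r k) j - (w (skip r k) m / w r m) * w r j).
      destruct (IHm w') as [b [[k0 [Hk0 Hb]] Hsum]].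
      set (s := rsum (S m) (fun k => b k * (w (skip r k) m / w r m))).
      exists (fun k => if Nat.eqb k r then - s else if Nat.ltb k r then b k else b (pred k)).
      split.
      * exists (skip r k0). split. unfold skip; destruct (Nat.ltb_spec k0 r); lia.
        unfold skip. destruct (Nat.ltb_spec k0 r).
        -- destruct (Nat.eqb_spec k0 r); [lia|]. destruct (Nat.ltb_spec k0 r); [exact Hb|lia].
        -- destruct (Nat.eqb_spec (S k0) r); [lia|]. destruct (Nat.ltb_spec (S k0) r); [lia|]. exact Hb.
      * intros j Hj. rewrite (rsum_skip (S m) r) by exact Hr.
        rewrite Nat.eqb_refl.
        rewrite (rsum_ext _ _ (fun k => b k * w (skip r k) j)).
        2:{ intros k Hk. unfold skip. destruct (Nat.ltb_spec k r).
            - destruct (Nat.eqb_spec k r); [lia|]. destruct (Nat.ltb_spec k r); [reflexivity|lia].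
            - destruct (Nat.eqb_spec (S k) r); [lia|]. destruct (Nat.ltb_spec (S k) r); [lia|]. reflexivity. }
        destruct (Nat.eq_dec j m) as [->|Hjm].
        -- assert (E: s * w r m = rsum (S m) (fun k => b k * w (skip r k) m)).
           { unfold s. rewrite Rmult_comm, <- rsum_scal. apply rsum_ext. intros; field. exact Hw. }
           replace (- s * w r m) with (- (s * w r m)) by ring. rewrite E. ring.
        -- assert (E: rsum (S m) (fun k => b k * w' k j) = rsum (S m) (fun k => b k * w (skip r k) j) + - (s * w r j)).
           { unfold s. rewrite (Rmult_comm _ (w r j)), <- rsum_scal, <- rsum_opp, <- rsum_plus.
             apply rsum_ext. intros. unfold w'. ring. }
           replace (- s * w r j) with (- (s * w r j)) by ring. rewrite <- E. apply Hsum. lia.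
    + assert (Hz : forall r, (r <= S m)%nat -> w r m = 0).
      { intros r Hr. apply NNPP. intro. apply Hn. exists r; auto. }
      destruct (IHm w) as [a [[k0 [Hk0 Ha]] Hs]].
      exists (fun k => if Nat.leb k m then a k else 0). split.
      * exists k0. split. lia. destruct (Nat.leb_spec k0 m); [exact Ha|lia].
      * intros j Hj. change (rsum (S (S m)) (fun k => (if Nat.leb k m then a k else 0) * w k j))
          with (rsum (S m) (fun k => (if Nat.leb k m then a k else 0) * w k j) + (if Nat.leb (S m) m then a (S m) else 0) * w (S m) j).
        destruct (Nat.leb_spec (S m) m); [lia|].
        rewrite (rsum_ext _ _ (fun k => a k * w k j)).
        2:{ intros k Hk. destruct (Nat.leb_spec k m); [reflexivity|lia]. }
        destruct (Nat.eq_dec j m) as [->|Hjm].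
        -- rewrite (rsum_ext _ _ (fun _ => 0)). rewrite rsum_zero. ring.
           intros k Hk. rewrite Hz by lia. ring.
        -- rewrite Hs by lia. ring.
Qed.

Lemma span n (v : nat -> nat -> R) :
  (forall c, (forall j, (j < n)%nat -> rsum n (fun k => c k * v k j) = 0) -> forall k, (k < n)%nat -> c k = 0) ->
  forall u : nat -> R, exists c, forall j, (j < n)%nat -> rsum n (fun k => c k * v k j) = u j.
Proof.
  intros Hind u.
  destruct (dep n (fun k j => if Nat.ltb k n then v k j else u j)) as [a [[k0 [Hk0 Ha]] Hs]].
  assert (Hs' : forall j, (j < n)%nat -> rsum n (fun k => a k * v k j) + a n * u j = 0).
  { intros j Hj. specialize (Hs j Hj). simpl in Hs.
    rewrite (rsum_ext n _ (fun k => a k * v k j)) in Hs.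
    2:{ intros k Hk. destruct (Nat.ltb_spec k n); [reflexivity|lia]. }
    destruct (Nat.ltb_spec n n); [lia|]. exact Hs. }
  assert (Han : a n <> 0).
  { intro H0. assert (H : forall k, (k < n)%nat -> a k = 0).
    { apply Hind. intros j Hj. specialize (Hs' j Hj). rewrite H0 in Hs'. lra. }
    destruct (Nat.eq_dec k0 n). subst; contradiction. apply Ha, H; lia. }
  exists (fun k => - a k / a n). intros j Hj. specialize (Hs' j Hj).
  rewrite (rsum_ext n _ (fun k => (-1 / a n) * (a k * v k j))) by (intros; field; exact Han).
  rewrite rsum_scal.
  replace (rsum n (fun k => a k * v k j)) with (- (a n * u j)) by lra. field. exact Han.
Qed.
Fixpoint zsum (m : nat) (f : nat -> Z) : Z :=
  match m with O => 0%Z | S p => (zsum p f + f p)%Z end.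

Lemma IZR_zsum m f : IZR (zsum m f) = rsum m (fun k => IZR (f k)).
Proof. induction m; simpl; [reflexivity|]. rewrite plus_IZR, IHm. reflexivity. Qed.

Section Lat.
Variable n : nat.
Variable L : zvec -> Prop.
Hypothesis HS : sublattice_An n L.

Lemma L_ext p q : L p -> (forall l, p l = q l) -> L q.
Proof. intros Hp H. replace q with p; auto. extensionality l; auto. Qed.

Lemma L_neg p : L p -> L (fun l => (- p l)%Z).
Proof. destruct HS as [_ [H0 Hs]]. intros Hp. apply (L_ext _ _ (Hs _ _ H0 Hp)). intros; lia. Qed.

Lemma L_add p q : L p -> L q -> L (fun l => (p l + q l)%Z).
Proof. destruct HS as [_ [H0 Hs]]. intros Hp Hq. apply (L_ext _ _ (Hs _ _ Hp (L_neg _ Hq))). intros; simpl; lia. Qed.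

Lemma L_natmul p : L p -> forall m : nat, L (fun l => (Z.of_nat m * p l)%Z).
Proof. destruct HS as [_ [H0 Hs]]. intros Hp m. induction m.
  - apply (L_ext _ _ H0). intros; simpl; lia.
  - apply (L_ext _ _ (L_add _ _ IHm Hp)). intros; lia. Qed.

Lemma L_zmul p : L p -> forall z : Z, L (fun l => (z * p l)%Z).
Proof. intros Hp z. destruct (Z_le_gt_dec 0 z).
  - apply (L_ext _ _ (L_natmul p Hp (Z.to_nat z))). intros; rewrite Z2Nat.id; lia.
  - apply (L_ext _ _ (L_neg _ (L_natmul p Hp (Z.to_nat (- z))))). intros; rewrite Z2Nat.id; lia. Qed.

Lemma L_comb (v : nat -> zvec) (a : nat -> Z) m : (forall k, (k < m)%nat -> L (v k)) ->
  L (fun l => zsum m (fun k => (a k * v k l)%Z)).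
Proof. destruct HS as [_ [H0 Hs]]. induction m; intros Hv.
  - exact H0.
  - simpl. apply (L_add _ _ (IHm (fun k Hk => Hv k ltac:(lia))) (L_zmul _ (Hv m ltac:(lia)) (a m))). Qed.

End Lat.

Lemma fin_bound (f : nat -> R) n : exists B, forall i, (i <= n)%nat -> f i <= B.
Proof. induction n.
  - exists (f 0%nat). intros i Hi. assert (i = 0%nat) by lia. subst; lra.
  - destruct IHn as [B HB]. exists (Rmax B (f (S n))). intros i Hi.
    destruct (Nat.eq_dec i (S n)). subst; apply Rmax_r.
    eapply Rle_trans; [apply HB; lia| apply Rmax_l]. Qed.

Lemma rank_big n L : (1 <= n)%nat -> sublattice_An n L -> has_rank n L ->
  forall i, (i <= n)%nat -> forall M : R, exists q, L q /\ forall j, (j <= n)%nat -> j <> i -> M < IZR (q j).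
Proof.
  intros Hn HS [v [Hv Hind]] i Hi M.
  set (V := fun k j => IZR (v k (skip i j))).
  assert (HV : forall c, (forall j, (j < n)%nat -> rsum n (fun k => c k * V k j) = 0) -> forall k, (k < n)%nat -> c k = 0).
  { intros c Hc. apply Hind. intros l Hl.
    rewrite sum_rsum. replace (S (Nat.pred n)) with n by lia.
    destruct (Nat.eq_dec l i) as [->|Hli].
    - assert (Hvi : forall k, (k < n)%nat -> IZR (v k i) = - rsum n (fun j => V k j)).
      { intros k Hk. destruct HS as [HA _]. destruct (HA _ (Hv k Hk)) as [Hsum _].
        rewrite sum_rsum, (rsum_skip n i) in Hsum by exact Hi. unfold V. lra. }
      rewrite (rsum_ext _ _ (fun k => - rsum n (fun j => c k * V k j))).
      2:{ intros k Hk. rewrite Hvi by exact Hk. rewrite (rsum_scal n (c k) (fun j => V k j)). ring. }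
      rewrite rsum_opp, rsum_swap. rewrite (rsum_ext _ _ (fun _ => 0)). rewrite rsum_zero; ring.
      intros j Hj. apply Hc; exact Hj.
    - set (j := if Nat.ltb l i then l else Nat.pred l).
      assert (Hj : (j < n)%nat) by (unfold j; destruct (Nat.ltb_spec l i); lia).
      assert (Hsk : skip i j = l) by (unfold skip, j; destruct (Nat.ltb_spec l i); [destruct (Nat.ltb_spec l i)| destruct (Nat.ltb_spec (Nat.pred l) i)]; lia).
      specialize (Hc j Hj). unfold V in Hc. rewrite Hsk in Hc. exact Hc. }
  destruct (span n V HV (fun _ => 1)) as [c Hc].
  assert (Hc' : forall l, (l <= n)%nat -> l <> i -> rsum n (fun k => c k * IZR (v k l)) = 1).
  { intros l Hl Hli.
    set (j := if Nat.ltb l i then l else Nat.pred l).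
    assert (Hj : (j < n)%nat) by (unfold j; destruct (Nat.ltb_spec l i); lia).
    assert (Hsk : skip i j = l) by (unfold skip, j; destruct (Nat.ltb_spec l i); [destruct (Nat.ltb_spec l i)| destruct (Nat.ltb_spec (Nat.pred l) i)]; lia).
    specialize (Hc j Hj). unfold V in Hc. rewrite Hsk in Hc. exact Hc. }
  destruct (fin_bound (fun l => rsum n (fun k => Rabs (IZR (v k l)))) n) as [B HB].
  set (N := M + B + 1).
  set (a := fun k => up (N * c k)).
  exists (fun l => zsum n (fun k => (a k * v k l)%Z)). split.
  - apply (L_comb n L HS). exact Hv.
  - intros j Hj Hji. rewrite IZR_zsum.
    rewrite (rsum_ext _ _ (fun k => N * (c k * IZR (v k j)) + (IZR (a k) - N * c k) * IZR (v k j))).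
    2:{ intros k Hk. rewrite mult_IZR. ring. }
    rewrite rsum_plus, rsum_scal, Hc' by assumption.
    assert (H1 : - rsum n (fun k => Rabs (IZR (v k j))) <= rsum n (fun k => (IZR (a k) - N * c k) * IZR (v k j))).
    { rewrite <- rsum_opp. apply rsum_le. intros k Hk.
      destruct (archimed (N * c k)) as [A1 A2]. unfold a.
      destruct (Rcase_abs (IZR (v k j))) as [Hneg|Hpos].
      - rewrite Rabs_left by exact Hneg. nra.
      - rewrite Rabs_right by exact Hpos. nra. }
    specialize (HB j Hj). simpl in HB. unfold N in *. lra.
Qed.
Definition T n (L : zvec -> Prop) (z : vec) : Prop :=
  forall q, L q -> ~ (forall j, (j <= n)%nat -> z j < IZR (q j)).

Lemma notT n L w : ~ T n L w -> exists q, L q /\ forall j, (j <= n)%nat -> w j < IZR (q j).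
Proof. intro H. apply NNPP. intro H2. apply H. intros q Lq Hq. apply H2. exists q; auto. Qed.

Lemma T_ex n L y q : T n L y -> L q -> exists j, (j <= n)%nat /\ IZR (q j) <= y j.
Proof. intros HT Lq. apply NNPP. intro H. apply (HT q Lq). intros j Hj. apply Rnot_le_lt. intro. apply H. exists j; auto. Qed.

Lemma T_up n L z z' : T n L z -> vle n z z' -> T n L z'.
Proof. intros HT Hle q Lq Hq. apply (HT q Lq). intros j Hj. specialize (Hle j Hj). specialize (Hq j Hj). lra. Qed.

Lemma fin_min (n : nat) (P : nat -> R -> Prop) :
  (forall i d d', 0 < d' <= d -> P i d -> P i d') ->
  (forall i, (i <= n)%nat -> exists d, 0 < d /\ P i d) ->
  exists d, 0 < d /\ forall i, (i <= n)%nat -> P i d.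
Proof.
  intros Hmono. induction n; intros H.
  - destruct (H 0%nat (le_n 0)) as [d [Hd HP]]. exists d. split; auto. intros i Hi. assert (i = 0%nat) by lia. subst; auto.
  - destruct IHn as [d1 [Hd1 HP1]]. intros; apply H; lia.
    destruct (H (S n) (le_n _)) as [d2 [Hd2 HP2]].
    exists (Rmin d1 d2). split. apply Rmin_pos; auto.
    intros i Hi. destruct (Nat.eq_dec i (S n)).
    + subst. apply (Hmono _ d2); auto. split. apply Rmin_pos; auto. apply Rmin_r.
    + apply (Hmono _ d1). split. apply Rmin_pos; auto. apply Rmin_l. apply HP1; lia.
Qed.

Lemma rsum_nonneg m f : (forall k, 0 <= f k) -> 0 <= rsum m f.
Proof. intros Hf. induction m; simpl. lra. specialize (Hf m). lra. Qed.

Lemma term_le_rsum (f : nat -> R) m j : (forall k, 0 <= f k) -> (j < m)%nat -> f j <= rsum m f.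
Proof. intros Hf. induction m; intros Hj. lia. simpl.
  destruct (Nat.eq_dec j m). subst. pose proof (rsum_nonneg m f Hf). lra.
  pose proof (IHm ltac:(lia)). specialize (Hf m). lra. Qed.

Lemma comp_le_dist n x y j : (j <= n)%nat -> Rabs (x j - y j) <= Defs.dist n x y.
Proof. intros Hj. unfold Defs.dist. rewrite <- sqrt_Rsqr_abs. apply sqrt_le_1_alt.
  rewrite sum_rsum. unfold Rsqr. replace ((x j - y j) * (x j - y j)) with ((fun i => (x i - y i) ^ 2) j) by (simpl; ring).
  apply (term_le_rsum (fun i => (x i - y i) ^ 2)). intros k. apply pow2_ge_0. lia. Qed.

Lemma sigmac_T n L z : Sigmac n L z <-> T n L z.
Proof. split.
  - intros HS q Lq Hlt.
    destruct (fin_min n (fun j d => z j + d <= IZR (q j))) as [d [Hd Hdd]].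
    { intros; lra. }
    { intros j Hj. exists (IZR (q j) - z j). specialize (Hlt j Hj). split; lra. }
    destruct (HS d Hd) as [y [Hy Hdist]]. apply (Hy q Lq). intros j Hj. unfold zR.
    pose proof (comp_le_dist n z y j Hj). specialize (Hdd j Hj).
    assert (Rabs (z j - y j) < d) by lra. apply Rabs_def2 in H0. lra.
  - intros HT eps Heps.
    set (s := INR (S n)).
    assert (Hs : 1 <= s) by (unfold s; rewrite S_INR; pose proof (pos_INR n); lra).
    set (c := eps / (2 * s)).
    assert (Hsc : s * c = eps / 2) by (unfold c; field; lra).
    assert (Hc : 0 < c) by (unfold c; apply Rdiv_lt_0_compat; lra).
    exists (fun j => z j + c). split.
    + intros q Lq Hle. apply (HT q Lq). intros j Hj. specialize (Hle j Hj). unfold zR in Hle. simpl in Hle. lra.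
    + unfold Defs.dist. rewrite (sum_eq _ (fun _ => c ^ 2)) by (intros; ring).
      rewrite sum_rsum.
      assert (E : forall m, rsum m (fun _ => c ^ 2) = INR m * c ^ 2).
      { induction m. simpl; ring. change (rsum (S m) (fun _ => c ^ 2)) with (rsum m (fun _ => c ^ 2) + c ^ 2). rewrite IHm, S_INR. ring. }
      rewrite E. fold s. rewrite <- (sqrt_pow2 eps) by lra. apply sqrt_lt_1_alt.
      assert (c <= eps / 2) by nra. split. nra. nra.
Qed.
Definition upd (z : vec) i t : vec := fun j => if Nat.eqb j i then t else z j.

Section Min.
Variable n : nat.
Variable L : zvec -> Prop.
Hypothesis Hbig : forall i, (i <= n)%nat -> forall M, exists q, L q /\ forall j, (j <= n)%nat -> j <> i -> M < IZR (q j).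

Lemma coord_min z i : (i <= n)%nat -> T n L z ->
  exists t, t <= z i /\ T n L (upd z i t) /\ forall e, 0 < e -> ~ T n L (upd z i (t - e)).
Proof.
  intros Hi HT.
  set (E := fun s => T n L (upd z i (- s))).
  destruct (fin_bound z n) as [M HM].
  destruct (Hbig i Hi M) as [q [Lq Hq]].
  assert (Hb : bound E).
  { exists (- IZR (q i)). intros s Hs. apply Rnot_lt_le. intro Hlt. apply (Hs q Lq).
    intros j Hj. unfold upd. destruct (Nat.eqb_spec j i). subst; lra.
    specialize (HM j Hj). specialize (Hq j Hj n0). lra. }
  assert (Hne : exists s, E s).
  { exists (- z i). apply (T_up _ _ _ _ HT). intros j Hj. unfold upd. destruct (Nat.eqb_spec j i). subst; lra. lra. }
  destruct (completeness E Hb Hne) as [m [Hub Hlub]].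
  exists (- m). split; [|split].
  - destruct Hne as [s0 _]. assert (E (- z i)).
    { apply (T_up _ _ _ _ HT). intros j Hj. unfold upd. destruct (Nat.eqb_spec j i). subst; lra. lra. }
    specialize (Hub _ H). lra.
  - intros q' Lq' Hlt.
    assert (Hqi : - m < IZR (q' i)) by (specialize (Hlt i Hi); unfold upd in Hlt; rewrite Nat.eqb_refl in Hlt; exact Hlt).
    destruct (classic (exists s, E s /\ - IZR (q' i) < s)) as [[s [Es Hs]]|Hno].
    + apply (Es q' Lq'). intros j Hj. specialize (Hlt j Hj). unfold upd in *. destruct (Nat.eqb_spec j i). subst; lra. exact Hlt.
    + assert (m <= - IZR (q' i)). { apply Hlub. intros s Es. apply Rnot_lt_le. intro. apply Hno. exists s; auto. }
      lra.
  - intros e He HT'. assert (E (m + e)). { unfold E. replace (- (m + e)) with (- m - e) by ring. exact HT'. }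
    specialize (Hub _ H). lra.
Qed.

Lemma seq_min : forall k, (k <= S n)%nat -> forall z, T n L z -> exists nu, vle n nu z /\ T n L nu /\
   forall i, (i < k)%nat -> forall e, 0 < e -> ~ T n L (upd nu i (nu i - e)).
Proof.
  induction k; intros Hk z HT.
  - exists z. split. intros j _; lra. split. exact HT. intros; lia.
  - destruct (IHk ltac:(lia) z HT) as [nu [Hle [HTn Hmin]]].
    destruct (coord_min nu k ltac:(lia) HTn) as [t [Ht [HTt Hmt]]].
    exists (upd nu k t). split; [|split].
    + intros j Hj. specialize (Hle j Hj). unfold upd. destruct (Nat.eqb_spec j k). subst; lra. lra.
    + exact HTt.
    + intros i Hi e He HT'. destruct (Nat.eq_dec i k).
      * subst. apply (Hmt e He). apply (T_up _ _ _ _ HT'). intros j Hj. unfold upd.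
        destruct (Nat.eqb_spec j k); rewrite ?Nat.eqb_refl; lra.
      * apply (Hmin i ltac:(lia) e He). apply (T_up _ _ _ _ HT'). intros j Hj. unfold upd.
        destruct (Nat.eqb_spec j i); destruct (Nat.eqb_spec i k); destruct (Nat.eqb_spec j k); subst; try lia; lra.
Qed.

End Min.
Lemma corner_e n L nu i : (i <= n)%nat -> T n L nu -> forall e, 0 < e -> ~ T n L (upd nu i (nu i - e)) ->
  exists q, L q /\ nu i - e < IZR (q i) <= nu i /\ forall j, (j <= n)%nat -> j <> i -> nu j < IZR (q j).
Proof.
  intros Hi HT e He HnT. destruct (notT _ _ _ HnT) as [q [Lq Hq]].
  assert (Hoth : forall j, (j <= n)%nat -> j <> i -> nu j < IZR (q j)).
  { intros j Hj Hji. specialize (Hq j Hj). unfold upd in Hq. destruct (Nat.eqb_spec j i); [lia|exact Hq]. }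
  exists q. split; [exact Lq|]. split; [|exact Hoth]. split.
  - specialize (Hq i Hi). unfold upd in Hq. rewrite Nat.eqb_refl in Hq. exact Hq.
  - destruct (T_ex _ _ _ _ HT Lq) as [j [Hj Hqj]]. destruct (Nat.eq_dec j i). subst; exact Hqj.
    specialize (Hoth j Hj n0). lra.
Qed.

Lemma corner n L nu i : (i <= n)%nat -> T n L nu -> (forall e, 0 < e -> ~ T n L (upd nu i (nu i - e))) ->
  exists q, L q /\ IZR (q i) = nu i /\ forall j, (j <= n)%nat -> j <> i -> nu j < IZR (q j).
Proof.
  intros Hi HT Hm.
  destruct (corner_e n L nu i Hi HT (1/2) ltac:(lra) (Hm (1/2) ltac:(lra))) as [q [Lq [[H1 H2] H3]]].
  exists q. split; [exact Lq|]. split; [|exact H3].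
  destruct (Req_dec (IZR (q i)) (nu i)) as [E|Ne]; [exact E|]. exfalso.
  destruct (corner_e n L nu i Hi HT (nu i - IZR (q i)) ltac:(lra) (Hm (nu i - IZR (q i)) ltac:(lra))) as [q2 [_ [[G1 G2] _]]].
  assert (Z1 : (q i < q2 i)%Z) by (apply lt_IZR; lra).
  assert (Z2 : IZR (q i) + 1 <= IZR (q2 i)) by (rewrite <- plus_IZR; apply IZR_le; lia).
  lra.
Qed.

Theorem mainTheorem6 (n : nat) (L : zvec -> Prop) :
  (1 <= n)%nat ->
  sublattice_An n L ->
  has_rank n L ->
  forall x : vec,
    Sigmac n L x <-> exists nu : vec, Extc n L nu /\ vle n nu x.
Proof.
  intros Hn HS Hr x. split.
  - intros Hx. apply sigmac_T in Hx.
    pose proof (rank_big n L Hn HS Hr) as Hbig.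
    destruct (seq_min n L Hbig (S n) (le_n _) x Hx) as [nu [Hle [HT Hmin]]].
    exists nu. split; [|exact Hle].
    split; [apply sigmac_T; exact HT|].
    destruct (fin_min n (fun i d => exists q, L q /\ IZR (q i) = nu i /\ forall j, (j <= n)%nat -> j <> i -> nu j + d <= IZR (q j)))
      as [d [Hd Hall]].
    { intros i d d' Hdd [q [Lq [Hqi Hq]]]. exists q. split; [exact Lq|]. split; [exact Hqi|].
      intros j Hj Hji. specialize (Hq j Hj Hji). lra. }
    { intros i Hi. destruct (corner n L nu i Hi HT (fun e He => Hmin i ltac:(lia) e He)) as [q [Lq [Hqi Hq]]].
      destruct (fin_min n (fun j d => j <> i -> nu j + d <= IZR (q j))) as [d [Hd Hdd]].
      { intros j d d' Hd' H Hji. specialize (H Hji). lra. }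
      { intros j Hj. destruct (Nat.eq_dec j i). exists 1. split. lra. intro; contradiction.
        exists (IZR (q j) - nu j). specialize (Hq j Hj n0). split. lra. intros; lra. }
      exists d. split; [exact Hd|]. exists q. split; [exact Lq|]. split; [exact Hqi|].
      intros j Hj Hji. apply Hdd; assumption. }
    exists d. split; [exact Hd|]. intros y Hdist Hy. apply sigmac_T in Hy.
    unfold deg. apply sum_Rle. intros i Hi.
    destruct (Hall i Hi) as [q [Lq [Hqi Hq]]].
    destruct (T_ex _ _ _ _ Hy Lq) as [j [Hj Hqj]].
    destruct (Nat.eq_dec j i). subst; lra.
    specialize (Hq j Hj n0). pose proof (comp_le_dist n nu y j Hj).
    assert (Rabs (nu j - y j) < d) by lra. apply Rabs_def2 in H0. lra.
  - intros [nu [[Hnu _] Hle]]. apply sigmac_T. apply sigmac_T in Hnu. exact (T_up _ _ _ _ Hnu Hle).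
Qed.
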